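(* Let $(M,\le)$ be a finite modular lattice and let $Q$ be a set of covering relations of $M$. Then $Q$ is the set of covering relations (of $M$) contained in some saturated transfer system on $M$ if and only if $Q$ is a saturated cover. Moreover, the assignments $Q\mapsto\langle Q\rangle$ and $R\mapsto R_{cov}$ are mutually inverse bijections between saturated covers on $M$ and saturated transfer systems on $M$, where $R_{cov}$ is the set of covering relations of $M$ lying in $R$.
   Context: A lattice $M$ is modular if $a\le b$ implies $a\vee(x\wedge b)=(a\vee x)\wedge b$ for all $a,b,x$. A transfer system on a finite lattice $(P,\le)$ is a partial order $R$ refining $\le$ closed under restriction: $x\,R\,z$ and $y\le z$ imply $(x\wedge y)\,R\,y$. It is saturated if $x\,R\,y$, $y\le z$ and $x\,R\,z$ imply $y\,R\,z$. For a set $Q$ of pairs $(x,y)$ with $x\le y$, $\langle Q\rangle$ is the intersection of all transfer systems containing $Q$. A covering diamond is a quadruple $x,y,x\wedge y,x\vee y$ with $x\ne y$ such that $x\vee y$ covers both $x$ and $y$ and both $x,y$ cover $x\wedge y$. A saturated cover on $M$ is a set $Q$ of covering relations of $M$ such that (1) for all $x,y\in M$, if $x\,Q\,(x\vee y)$ then $(x\wedge y)\,Q\,y$; and (2) for every covering diamond, if three of its four covering relations ($x\wedge y\lessdot x$, $x\wedge y\lessdot y$, $x\lessdot x\vee y$, $y\lessdot x\vee y$) lie in $Q$, then so does the fourth. *)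

(* Defs.v *)
From HB Require Import structures.
From mathcomp Require Import all_boot all_order.
Set Implicit Arguments. Unset Strict Implicit. Unset Printing Implicit Defensive.
Import Order.TTheory.
Local Open Scope order_scope.

Section Defs.
Context {disp : Order.disp_t} {M : finLatticeType disp}.

Definition modular_lattice : Prop :=
  forall a b x : M, a <= b -> a `|` (x `&` b) = (a `|` x) `&` b.

Definition covers (x y : M) : Prop :=
  x < y /\ (forall z : M, x < z -> z < y -> False).

Definition transfer_system (R : M -> M -> Prop) : Prop :=
  [/\ (forall x, R x x),
      (forall x y, R x y -> R y x -> x = y),
      (forall x y z, R x y -> R y z -> R x z),
      (forall x y, R x y -> x <= y)
    & (forall x y z, R x z -> y <= z -> R (x `&` y) y)].

Definition saturated (R : M -> M -> Prop) : Prop :=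
  forall x y z, R x y -> y <= z -> R x z -> R y z.

Definition saturated_transfer_system (R : M -> M -> Prop) : Prop :=
  transfer_system R /\ saturated R.

Definition gen_ts (Q : M -> M -> Prop) : M -> M -> Prop :=
  fun x y => forall R, transfer_system R -> (forall a b, Q a b -> R a b) -> R x y.

Definition cov_part (R : M -> M -> Prop) : M -> M -> Prop :=
  fun x y => covers x y /\ R x y.

Definition set_of_covers (Q : M -> M -> Prop) : Prop :=
  forall x y, Q x y -> covers x y.

Definition covering_diamond (x y : M) : Prop :=
  [/\ x <> y, covers x (x `|` y), covers y (x `|` y),
      covers (x `&` y) x & covers (x `&` y) y].

Definition saturated_cover (Q : M -> M -> Prop) : Prop :=
  [/\ set_of_covers Q,
      (forall x y, Q x (x `|` y) -> Q (x `&` y) y)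
    & (forall x y, covering_diamond x y ->
        let a := Q (x `&` y) x in let b := Q (x `&` y) y in
        let c := Q x (x `|` y) in let d := Q y (x `|` y) in
        [/\ (a /\ b /\ c -> d), (a /\ b /\ d -> c),
            (a /\ c /\ d -> b) & (b /\ c /\ d -> a)])].
End Defs.

(* Main.v *)
Require Import Defs.
From mathcomp Require Import all_boot all_order.
From Stdlib Require Import Classical FunctionalExtensionality PropExtensionality.
Set Implicit Arguments. Unset Strict Implicit. Unset Printing Implicit Defensive.
Import Order.TTheory.
Open Scope order_scope.

Section Aux.
Context {disp : Order.disp_t} {M : finLatticeType disp}.

Inductive clos (Q : M -> M -> Prop) : M -> M -> Prop :=
| cl_refl x : clos Q x x
| cl_step x y z : clos Q x y -> Q y z -> clos Q x z.

Lemma cov_mid (a b w : M) : covers a b -> a <= w -> w <= b -> w = a \/ w = b.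
Proof.
move=> [_ H] aw wb; move: aw; rewrite le_eqVlt => /orP [/eqP ->|aw]; first by left.
move: wb; rewrite le_eqVlt => /orP [/eqP ->|wb]; first by right.
by case: (H w aw wb).
Qed.

Lemma cov_lt (a b : M) : covers a b -> a < b. Proof. by case. Qed.

Lemma leUxP (a b c : M) : a <= c -> b <= c -> a `|` b <= c.
Proof. by move=> h1 h2; rewrite leUx h1 h2. Qed.

Lemma cov_join (y z b : M) : covers y z -> b <= z -> ~~ (b <= y) -> y `|` b = z.
Proof.
move=> C bz nby; have [E|E] := cov_mid C (leUl y b) (leUxP (ltW (cov_lt C)) bz) => //.
by move: nby; rewrite -E leUr.
Qed.

Lemma covF (Hm : modular_lattice (M := M)) (y z c : M) :
  covers y z -> c <= z -> ~~ (c <= y) -> covers (c `&` y) c.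
Proof.
move=> C cz ncy; split.
  rewrite lt_neqAle leIl andbT; apply/eqP => E; by move: ncy; rewrite -E leIr.
move=> w lw wc.
have E := Hm w c y (ltW wc).
rewrite meetC (join_l (ltW lw)) in E.
have wz : w <= z by apply: le_trans (ltW wc) cz.
have [E1|E1] := cov_mid C (leUr y w) (leUxP wz (ltW (cov_lt C))).
  have wy : w <= y by rewrite -E1 leUl.
  have : w <= c `&` y by rewrite lexI (ltW wc) wy.
  by move=> h; have := lt_le_trans lw h; rewrite ltxx.
by move: wc; rewrite E E1 (meet_r cz) ltxx.
Qed.

Variable Q : M -> M -> Prop.
Hypothesis Qcov : set_of_covers Q.
Hypothesis Qres : forall x y, Q x (x `|` y) -> Q (x `&` y) y.

Lemma clos_le x y : clos Q x y -> x <= y.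
Proof.
elim=> [//|a b c _ IH Hq]; apply: le_trans IH _; exact: ltW (cov_lt (Qcov Hq)).
Qed.

Lemma clos_trans x y z : clos Q x y -> clos Q y z -> clos Q x z.
Proof. move=> H1 H2; elim: H2 H1 => // a b c _ IH Hq H1; apply: cl_step (IH H1) Hq. Qed.

Lemma clos_one x y : Q x y -> clos Q x y.
Proof. by move=> H; apply: cl_step (cl_refl _ _) H. Qed.

Lemma clos_res_one w z y : Q w z -> y <= z -> clos Q (w `&` y) y.
Proof.
move=> Hq yz; have C := Qcov Hq.
have [yw|nyw] := boolP (y <= w); first by rewrite (meet_r yw); apply: cl_refl.
apply: clos_one; apply: Qres; by rewrite (cov_join C yz nyw).
Qed.

Lemma clos_ts : transfer_system (clos Q).
Proof.
split.
- by move=> x; apply: cl_refl.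
- by move=> x y H1 H2; apply: le_anti; rewrite (clos_le H1) (clos_le H2).
- exact: clos_trans.
- exact: clos_le.
move=> x y z H; elim: H y => [a y ya|a w c Haw IH Hq y yc].
  by rewrite (meet_r ya); apply: cl_refl.
have H1 := clos_res_one Hq yc.
have H2 := IH (w `&` y) (leIl _ _).
by rewrite meetA (meet_l (clos_le Haw)) in H2; apply: clos_trans H2 H1.
Qed.

Lemma gen_clos x y : gen_ts Q x y <-> clos Q x y.
Proof.
split.
  by move=> H; apply: H; [apply: clos_ts | move=> a b; apply: clos_one].
elim=> [a|a b c _ IH Hq] R HR HQ; case: (HR) => Rr _ Rt _ _; first exact: Rr.
exact: Rt (IH R HR HQ) (HQ _ _ Hq).
Qed.

Lemma clos_cov a b : covers a b -> clos Q a b -> Q a b.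
Proof.
move=> C H; inversion H as [a0 E|a0 w b0 Haw Hq E1 E2]; subst.
  by move: (cov_lt C); rewrite ltxx.
have [E|E] := cov_mid C (clos_le Haw) (ltW (cov_lt (Qcov Hq))); first by subst.
by subst; move: (cov_lt (Qcov Hq)); rewrite ltxx.
Qed.

Lemma exists_cov_below (x z : M) : x < z -> exists w, x <= w /\ covers w z.
Proof.
have [n] : exists n, (#|[set u | (x < u)%O]| <= n)%N by eexists.
elim: n x => [|n IH] x Hn xz.
  move: Hn; rewrite leqn0 => /eqP/cards0_eq E.
  have : z \in [set u | (x < u)%O] by rewrite inE.
  by rewrite E inE.
have [C|NC] := classic (covers x z); first by exists x.
have [v [xv vz]] : exists v, x < v /\ v < z.
  apply: NNPP => H; apply: NC; split => // v a b; apply: H; by exists v.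
have Hlt : (#|[set u | (v < u)%O]| <= n)%N.
  rewrite -ltnS; apply: leq_trans Hn; apply: proper_card; apply/properP; split.
    by apply/subsetP => u; rewrite !inE => /(lt_trans xv).
  by exists v; rewrite !inE ?ltxx.
have [w [vw C]] := IH v Hlt vz.
by exists w; split => //; apply: le_trans (ltW xv) vw.
Qed.

Lemma chain_exists (x z : M) : x <= z ->
  (forall a b, x <= a -> b <= z -> covers a b -> Q a b) -> clos Q x z.
Proof.
have [n] : exists n, (#|[set u | (u < z)%O]| <= n)%N by eexists.
elim: n z => [|n IH] z Hn xz H.
  move: xz; rewrite le_eqVlt => /orP [/eqP ->|xz]; first exact: cl_refl.
  move: Hn; rewrite leqn0 => /eqP/cards0_eq E.
  have : x \in [set u | (u < z)%O] by rewrite inE.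
  by rewrite E inE.
move: xz; rewrite le_eqVlt => /orP [/eqP ->|xz]; first exact: cl_refl.
have [w [xw C]] := exists_cov_below xz.
have Hlt : (#|[set u | (u < w)%O]| <= n)%N.
  rewrite -ltnS; apply: leq_trans Hn; apply: proper_card; apply/properP; split.
    by apply/subsetP => u; rewrite !inE => /lt_le_trans; apply; apply: ltW (cov_lt C).
  by exists w; rewrite !inE ?ltxx ?(cov_lt C).
apply: cl_step (IH w Hlt xw _) (H _ _ xw (lexx _) C).
move=> a b xa bw; apply: H xa _; apply: le_trans bw (ltW (cov_lt C)).
Qed.

Hypothesis Hm : modular_lattice (M := M).
Hypothesis Qdia : forall x y, covering_diamond x y ->
        let a := Q (x `&` y) x in let b := Q (x `&` y) y in
        let c := Q x (x `|` y) in let d := Q y (x `|` y) in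
        [/\ (a /\ b /\ c -> d), (a /\ b /\ d -> c),
            (a /\ c /\ d -> b) & (b /\ c /\ d -> a)].

Lemma keyK x z : clos Q x z -> forall a b, x <= a -> b <= z -> covers a b -> Q a b.
Proof.
elim=> [x0 a b xa bx C|x0 y z0 Hxy IH Hq a b xa bz C].
  by have := lt_le_trans (le_lt_trans xa (cov_lt C)) bx; rewrite ltxx.
have Cy := Qcov Hq.
have [by_|nby] := boolP (b <= y); first exact: IH xa by_ C.
have Cb := covF Hm Cy bz nby.
have Qb : Q (b `&` y) b by rewrite meetC; apply: Qres; rewrite (cov_join Cy bz nby).
have [ay|nay] := boolP (a <= y).
  have ab : a <= b `&` y by rewrite lexI (ltW (cov_lt C)) ay.
  have [E|E] := cov_mid C ab (leIl _ _).
    by rewrite -E.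
  by move: (cov_lt Cb); rewrite E ltxx.
have az : a <= z0 by apply: le_trans (ltW (cov_lt C)) bz.
have Ca := covF Hm Cy az nay.
have Qa : Q (a `&` y) a by rewrite meetC; apply: Qres; rewrite (cov_join Cy az nay).
have ab := ltW (cov_lt C).
have Emeet : a `&` (b `&` y) = a `&` y by rewrite meetA (meet_l ab).
have Ejoin : a `|` (b `&` y) = b.
  by rewrite meetC (Hm y ab) [a `|` y]joinC (cov_join Cy az nay) (meet_r bz).
have Cab : covers (a `&` y) (b `&` y).
  split.
    rewrite lt_neqAle; apply/andP; split; last first.
      by rewrite lexI leIr andbT; apply: le_trans (leIl _ _) ab.
    apply/eqP => E.
    by apply: Cb.2 (cov_lt C); rewrite -E; apply: cov_lt Ca.
  move=> w lw wby.
  have E := Hm a (ltW wby).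
  rewrite Emeet (join_l (ltW lw)) in E.
  have wb : w <= b by apply: le_trans (ltW wby) (leIl _ _).
  have [E1|E1] := cov_mid C (leUr a w) (leUxP wb ab).
    have wa : w <= a by rewrite -E1 leUl.
    have wy : w <= y by apply: le_trans (ltW wby) (leIr _ _).
    have : w <= a `&` y by rewrite lexI wa wy.
    by move=> h; have := lt_le_trans lw h; rewrite ltxx.
  by move: wby; rewrite E E1 meetA meetxx ltxx.
have D : covering_diamond a (b `&` y).
  rewrite /covering_diamond Emeet Ejoin; split => //.
  by move=> E; move: nay; rewrite E leIr.
have [_ H2 _ _] := Qdia D.
move: H2; rewrite Emeet Ejoin; apply; split => //; split => //.
apply: IH Cab; last by apply: leIr.
by rewrite lexI xa (clos_le Hxy).
Qed.
Lemma clos_sat : saturated (clos Q).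
Proof.
move=> x y z Hxy yz Hxz; apply: chain_exists yz _ => a b ya bz C.
exact: (keyK Hxz (le_trans (clos_le Hxy) ya) bz C).
Qed.
End Aux.

Section Main.
Context {disp : Order.disp_t} {M : finLatticeType disp}.
Hypothesis Hm : modular_lattice (M := M).

Lemma res_up (R : M -> M -> Prop) x y b : transfer_system R -> R x y -> x <= b -> b <= y -> R x b.
Proof. by case=> _ _ _ _ Rres Rxy xb bY; have := Rres _ _ _ Rxy bY; rewrite (meet_l xb). Qed.

Lemma sts_cover (R : M -> M -> Prop) : saturated_transfer_system R -> saturated_cover (cov_part R).
Proof.
move=> [[Rr Ra Rt Rl Rres] Rs]; split.
- by move=> x y [].
- move=> x y [C Rxy]; split; last exact: Rres Rxy (leUr _ _).
  have nyx : ~~ (y <= x).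
    apply/negP => yx; move: (cov_lt C); by rewrite (join_l yx) ltxx.
  rewrite meetC; exact: (@covF _ _ Hm x (x `|` y) y C (leUr _ _) nyx).
move=> x y [xy Cx Cy Cmx Cmy] /=; split.
- move=> [[_ H1] [[_ H2] [_ H3]]]; split => //.
  exact: Rs H2 (leUr _ _) (Rt _ _ _ H1 H3).
- move=> [[_ H1] [[_ H2] [_ H3]]]; split => //.
  exact: Rs H1 (leUl _ _) (Rt _ _ _ H2 H3).
- move=> [[_ H1] [[_ H2] [_ H3]]]; split => //.
  have := Rres _ _ _ (Rt _ _ _ H1 H2) (leUr y x).
  by rewrite -meetA meetxx.
- move=> [[_ H1] [[_ H2] [_ H3]]]; split => //.
  have := Rres _ _ _ (Rt _ _ _ H1 H3) (leUl x y).
  by rewrite meetAC meetxx.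
Qed.

Lemma sts_gen (R : M -> M -> Prop) : saturated_transfer_system R ->
  forall x y, gen_ts (cov_part R) x y <-> R x y.
Proof.
move=> HR; have [HT Rs] := HR; have [Rr Ra Rt Rl Rres] := HT.
have [Qc Qr _] := sts_cover HR.
move=> x y; rewrite (gen_clos Qc Qr); split.
  by elim=> // a b c _ IH [_ H]; apply: Rt IH H.
move=> Rxy; apply: chain_exists (Rl _ _ Rxy) _ => a b xa bY C; split => //.
have xb : x <= b by apply: le_trans xa (ltW (cov_lt C)).
apply: Rs (res_up HT Rxy xa (le_trans (ltW (cov_lt C)) bY)) (ltW (cov_lt C)) _.
exact: res_up HT Rxy xb bY.
Qed.

Lemma sc_gen_tmp : True. Proof. by []. Qed.
End Main.
Section Main2.
Context {disp : Order.disp_t} {M : finLatticeType disp}.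
Hypothesis Hm : modular_lattice (M := M).
Lemma sc_gen (Q : M -> M -> Prop) : saturated_cover Q ->
  saturated_transfer_system (gen_ts Q) /\ (forall x y, cov_part (gen_ts Q) x y <-> Q x y).
Proof.
move=> [Qc Qr Qd].
have E : forall x y, gen_ts Q x y <-> clos Q x y by move=> x y; exact: (gen_clos Qc Qr x y).
split.
  split.
    have [r a t l rs] := clos_ts Qc Qr; split.
    - by move=> x; apply/E.
    - by move=> x y /E h1 /E h2; apply: a.
    - by move=> x y z /E h1 /E h2; apply/E; apply: t h1 h2.
    - by move=> x y /E; apply: l.
    - by move=> x y z /E h1 h2; apply/E; apply: rs h1 h2.
  move=> x y z /E h1 h2 /E h3; apply/E; exact: (clos_sat Qc Qr Hm Qd h1 h2 h3).
move=> x y; split.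
  by move=> [C /E H]; exact: (clos_cov Qc C H).
by move=> H; split; [apply: Qc | apply/E; apply: clos_one].
Qed.
End Main2.

Theorem theorem3p13 (disp : Order.disp_t) (M : finLatticeType disp) :
  modular_lattice (M := M) ->
  [/\ (forall Q : M -> M -> Prop, set_of_covers Q ->
         ((exists R : M -> M -> Prop, saturated_transfer_system R /\
             (forall x y, Q x y <-> cov_part R x y))
          <-> saturated_cover Q)),
      (forall Q : M -> M -> Prop, saturated_cover Q ->
         saturated_transfer_system (gen_ts Q) /\
         (forall x y, cov_part (gen_ts Q) x y <-> Q x y))
    & (forall R : M -> M -> Prop, saturated_transfer_system R ->
         saturated_cover (cov_part R) /\
         (forall x y, gen_ts (cov_part R) x y <-> R x y))].
Proof.
move=> Hm; split.
- move=> Q Qc; split.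
    move=> [R [HR HQ]].
    have -> : Q = cov_part R.
      apply: functional_extensionality => x; apply: functional_extensionality => y.
      exact: propositional_extensionality (HQ x y).
    exact: (sts_cover Hm HR).
  move=> Hsc; exists (gen_ts Q); have [H1 H2] := sc_gen Hm Hsc.
  by split => // x y; apply: iff_sym (H2 x y).
- by move=> Q HQ; exact: (sc_gen Hm HQ).
- move=> R HR; split; [exact: (sts_cover Hm HR) | exact: (sts_gen Hm HR)].
Qed.
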